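(* Let $k\in\mathbb N$. For every $i\in\{1,\dots,k\}$, let $G_i$ be a countable group, and let $X_i$ be a proper metric space equipped with a $G_i$-action by isometries which is properly proximal. Let $G$ be a subgroup of $G_1\times\dots\times G_k$ whose projection to each factor is surjective. Then the $G$-action on $X_1\times\dots\times X_k$ (the product action, with the product metric, e.g. the $\ell^2$-product metric) is properly proximal.
   Context: For a group $H$ acting by isometries on a proper metric space $Y$: a sequence $(h_n)$ in $H$ escapes every compact subspace of $Y$ if for some (equivalently any) $y\in Y$, $(h_ny)$ eventually leaves every compact subset. The action is properly proximal if there exist finitely many compact metrizable $H$-spaces $K_1,\dots,K_\ell$, none carrying an $H$-invariant probability measure, and diffuse probability measures $\eta_i$ on $K_i$, such that for every sequence $(h_n)$ escaping every compact subspace of $Y$, there exist $i$ and a subsequence $(h_{\sigma(n)})$ with $h_{\sigma(n)}h\eta_i-h_{\sigma(n)}\eta_i\to0$ weak-$*$ for every $h\in H$. *)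

(* Defs.v *)
From HB Require Import structures.
From mathcomp Require Import all_boot all_order all_algebra.
From mathcomp Require Import monoid.
From mathcomp Require Import all_classical all_reals.
From mathcomp Require Import topology normedtype sequences measure lebesgue_integral probability.
From mathcomp Require Import Rstruct Rstruct_topology.

Set Implicit Arguments.
Unset Strict Implicit.
Unset Printing Implicit Defensive.

Import Order.TTheory GRing.Theory Num.Theory.
Local Open Scope classical_set_scope.
Local Open Scope ring_scope.

Notation R := Rdefinitions.R.

Section MetricDefs.
Variables (X : Type) (d : X -> X -> R).

Definition is_metric : Prop :=
  [/\ forall x y, 0 <= d x y,
      forall x y, d x y = 0 <-> x = y,
      forall x y, d x y = d y x &
      forall x y z, d x z <= d x y + d y z].

Definition mball (x : X) (r : R) : set X := [set y | d x y < r].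
Definition mclosed_ball (x : X) (r : R) : set X := [set y | d x y <= r].

Definition mopen (U : set X) : Prop :=
  forall x, U x -> exists2 r : R, 0 < r & mball x r `<=` U.

Definition mcompact (C : set X) : Prop :=
  forall (I : Type) (U : I -> set X), (forall i, mopen (U i)) ->
    C `<=` \bigcup_(i in [set: I]) U i ->
    exists2 F : set I, finite_set F & C `<=` \bigcup_(i in F) U i.

Definition proper_metric : Prop :=
  is_metric /\ forall x r, mcompact (mclosed_ball x r).

End MetricDefs.

Definition is_action (G : groupType) (Y : Type) (act : G -> Y -> Y) : Prop :=
  (forall y, act 1%g y = y) /\ (forall g h y, act (g * h)%g y = act g (act h y)).

Definition isometric_action (G : groupType) (Y : Type) (d : Y -> Y -> R)
  (act : G -> Y -> Y) : Prop :=
  is_action act /\ forall g x y, d (act g x) (act g y) = d x y.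

Definition escapes (G : groupType) (Y : Type) (d : Y -> Y -> R)
  (act : G -> Y -> Y) (h : nat -> G) : Prop :=
  exists y : Y, forall C : set Y, mcompact d C ->
    exists N : nat, forall n : nat, (N <= n)%N -> ~ C (act (h n) y).

Notation borel K := (g_sigma_algebraType (@open K)).

Definition compact_metrizable (K : pseudoPMetricType R) : Prop :=
  hausdorff_space K /\ compact [set: K].

(* G acts on K by homeomorphisms (continuous action of the discrete group G) *)
Definition continuous_action (G : groupType) (K : topologicalType)
  (act : G -> K -> K) : Prop :=
  is_action act /\ forall g, continuous (act g).

Definition has_invariant_prob (G : groupType) (K : pseudoPMetricType R)
  (act : G -> K -> K) : Prop :=
  exists mu : probability (borel K) R,
    forall (g : G) (A : set (borel K)), measurable A ->
      mu ((act g : borel K -> borel K) @^-1` A) = mu A.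

Definition diffuse (K : pseudoPMetricType R) (eta : probability (borel K) R) : Prop :=
  forall x : borel K, eta [set x] = 0%E.

(* (h_{sigma n} g eta - h_{sigma n} eta) -> 0 weak-*, i.e. tested against every
   continuous f : K -> R (pushforward integrals written via change of variables) *)
Definition weakstar_asymp (G : groupType) (K : pseudoPMetricType R)
  (act : G -> K -> K) (eta : probability (borel K) R) (u : nat -> G) : Prop :=
  forall (g : G) (f : K -> R), continuous f ->
    (fun n => (\int[eta]_x f (act (u n * g)%g x))
              - (\int[eta]_x f (act (u n) x))) @ \oo --> (0 : R).

Definition properly_proximal (G : groupType) (Y : Type) (d : Y -> Y -> R)
  (act : G -> Y -> Y) : Prop :=
  proper_metric d /\ isometric_action d act /\
  exists (l : nat) (K : 'I_l -> pseudoPMetricType R)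
         (actK : forall i, G -> K i -> K i)
         (eta : forall i, probability (borel (K i)) R),
    (forall i, [/\ compact_metrizable (K i), continuous_action (actK i),
                   ~ has_invariant_prob (actK i) & diffuse (eta i)]) /\
    forall h : nat -> G, escapes d act h ->
      exists (i : 'I_l) (sigma : nat -> nat),
        (forall m n, (m < n)%N -> (sigma m < sigma n)%N) /\
        weakstar_asymp (actK i) (eta i) (fun n => h (sigma n)).

Definition countable_group (G : groupType) : Prop :=
  exists f : G -> nat, injective f.

Definition group_hom (G H : groupType) (p : G -> H) : Prop :=
  forall x y, p (x * y)%g = (p x * p y)%g.

Definition prod_dist (k : nat) (X : 'I_k -> Type) (d : forall i, X i -> X i -> R)
  (x y : forall i, X i) : R :=
  Num.sqrt (\sum_(i < k) (d i (x i) (y i)) ^+ 2).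

Definition prod_act (k : nat) (Gs : 'I_k -> groupType) (G : groupType)
  (p : forall i, G -> Gs i) (X : 'I_k -> Type) (act : forall i, Gs i -> X i -> X i)
  (g : G) (x : forall i, X i) : forall i, X i :=
  fun i => act i (p i g) (x i).

(* Main.v *)
Require Import Defs.
From mathcomp Require Import all_boot all_order all_algebra monoid.
From mathcomp Require Import all_classical all_reals.
From mathcomp Require Import topology normedtype sequences measure lebesgue_integral probability.
From mathcomp Require Import Rstruct Rstruct_topology.
From mathcomp Require Import ring lra.
Set Implicit Arguments.
Unset Strict Implicit.
Unset Printing Implicit Defensive.
Import Order.TTheory GRing.Theory Num.Theory.
Local Open Scope classical_set_scope.
Local Open Scope ring_scope.

Definition incr (s : nat -> nat) := forall m n, (m < n)%N -> (s m < s n)%N.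

Lemma incr_ge s : incr s -> forall n, (n <= s n)%N.
Proof.
move=> hs; elim=> [//|n IH]; apply: leq_ltn_trans IH _; exact: hs.
Qed.

Lemma incr_comp s t : incr s -> incr t -> incr (fun n => s (t n)).
Proof. by move=> hs ht m n mn; apply/hs/ht. Qed.

Lemma extract (P : nat -> nat -> Prop) :
  (forall m N, exists n, (N <= n)%N /\ P m n) ->
  exists s, incr s /\ forall m, P m (s m).
Proof.
move=> H.
have [c hc] : exists c : nat -> nat -> nat, forall m N, (N <= c m N)%N /\ P m (c m N).
  have H' : forall m, exists f : nat -> nat, forall N, (N <= f N)%N /\ P m (f N).
    by move=> m; have [f hf] := choice (H m); exists f.
  by have [c1 hc1] := choice H'; exists c1.
pose fix s n := if n is n'.+1 then c n (s n').+1 else c 0%N 0%N.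
exists s; split; last by case=> [|n]; apply hc.
apply: (homo_ltn (r := fun a b => (a < b)%N)); first by move=> a b b2; apply: ltn_trans.
by move=> i /=; apply: (proj1 (hc _ _)).
Qed.

Lemma archi_inv (e : R) : 0 < e -> exists m : nat, forall n, (m <= n)%N -> (n.+1%:R)^-1 < e.
Proof.
move=> e0; have := @archi_boundP _ e^-1; rewrite invr_ge0 ltW // => /(_ isT) h.
exists (Num.Def.archi_bound e^-1) => n mn.
rewrite -(invrK e) ltf_pV2 ?posrE ?invr_gt0 //.
apply: lt_le_trans h _; rewrite ler_nat; exact: leqW.
Qed.

Section Metric.
Variables (X : Type) (d : X -> X -> R) (hd : is_metric d).

Definition conv (z : X) (u : nat -> X) :=
  forall e : R, 0 < e -> exists M, forall m, (M <= m)%N -> d z (u m) < e.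

Lemma d_ge0 x y : 0 <= d x y. Proof. by case: hd. Qed.
Lemma d_xx x : d x x = 0. Proof. by case: hd => _ h _ _; apply/h. Qed.
Lemma d_sym x y : d x y = d y x. Proof. by case: hd. Qed.
Lemma d_tri x y z : d x z <= d x y + d y z. Proof. by case: hd. Qed.

Lemma mball_open x r : mopen d (mball d x r).
Proof.
rewrite /mball => y /= dxy; exists (r - d x y); first by rewrite subr_gt0.
move=> z; rewrite /mball /= => dyz; have := d_tri x y z; lra.
Qed.

Lemma finite_nat_bound (A : set nat) : finite_set A -> exists N, forall n, A n -> (n <= N)%N.
Proof.
move=> /finite_seqP[S ->]; exists (\max_(x <- S) x) => n /= nS.
by apply: (@leq_bigmax_seq _ _ xpredT id).
Qed.

Lemma finite_fun_bound (T : Type) (A : set T) (f : T -> nat) :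
  finite_set A -> exists N, forall x, A x -> (f x <= N)%N.
Proof.
move=> /(finite_image f) /finite_nat_bound [N hN]; exists N => x Ax.
by apply: hN; exists x.
Qed.

Lemma compact_bounded C y : mcompact d C -> exists B, forall x, C x -> d y x <= B.
Proof.
move=> hC.
have cov : C `<=` \bigcup_(i in [set: nat]) mball d y i%:R.
  move=> x _; exists (Num.Def.archi_bound (d y x)) => //.
  exact: (archi_boundP (d_ge0 y x)).
have [F fF hF] := hC nat (fun n => mball d y n%:R) (fun n => @mball_open y n%:R) cov.
have [N hN] := finite_fun_bound id fF.
exists N%:R => x /hF [n Fn /= hn]; apply/ltW/(lt_le_trans hn).
by rewrite ler_nat; apply: hN.
Qed.

Lemma compact_seq C u : mcompact d C -> (forall n, C (u n)) ->
  exists z s, incr s /\ conv z (fun m => u (s m)).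
Proof.
move=> hC hu.
case: (pselect (exists z, forall e, 0 < e -> forall N, exists n, (N <= n)%N /\ d z (u n) < e)) => [[z hz]|hn].
  have [s [hs hs']] := extract (P := fun m n => d z (u n) < (m.+1%:R)^-1)
    (fun m N => hz _ (ltac:(by rewrite invr_gt0 ltr0Sn) : 0 < (m.+1%:R)^-1 :> R) N).
  exists z, s; split=> // e e0; have [M hM] := archi_inv e0; exists M => m Mm.
  exact: lt_trans (hs' m) (hM m Mm).
have h1 : forall z, exists p : R * nat, 0 < p.1 /\ forall n, (p.2 <= n)%N -> ~ d z (u n) < p.1.
  move=> z; apply: contrapT => hz; apply: hn; exists z => e e0 N.
  apply: contrapT => hne; apply: hz; exists (e, N); split=> // n Nn dlt; apply: hne; by exists n.
have [f hf] := choice h1.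
have cov : C `<=` \bigcup_(z in [set: X]) mball d z (f z).1.
  move=> x _; exists x => //; rewrite /mball /= d_xx; exact: (proj1 (hf x)).
have [F fF hF] := hC X (fun z => mball d z (f z).1) (fun z => @mball_open z _) cov.
have [N hN] := finite_fun_bound (fun z => (f z).2) fF.
have [z Fz /= hz] := hF _ (hu N).
by case: (proj2 (hf z) N (hN z Fz) hz).
Qed.

Lemma seq_compact C :
  (forall u, (forall n, C (u n)) -> exists z s, C z /\ incr s /\ conv z (fun m => u (s m))) ->
  mcompact d C.
Proof.
move=> hS I U hU hcov.
case: (pselect (exists c0, C c0)) => [[c0 Cc0]|hC0]; last first.
  exists set0 => // x Cx; case: hC0; by exists x.
have [i0 _ _] := hcov c0 Cc0.
have [del del0 hdel] : exists2 del : R, 0 < del &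
    forall x, C x -> exists i, mball d x del `<=` U i.
  apply: contrapT => hn.
  have h1 : forall m : nat, exists x, C x /\ forall i, ~ (mball d x (m.+1%:R)^-1 `<=` U i).
    move=> m; apply: contrapT => hm; apply: hn; exists (m.+1%:R)^-1.
      by rewrite invr_gt0 ltr0Sn.
    move=> x Cx; apply: contrapT => hx; apply: hm; exists x; split => // i hi; apply: hx.
    by exists i.
  have [u hu] := choice h1.
  have [z [s [Cz [hs hc]]]] := hS u (fun n => proj1 (hu n)).
  have [i _ zi] := hcov z Cz.
  have [r r0 hr] := hU i z zi.
  have r20 : 0 < r / 2 by rewrite divr_gt0.
  have [M1 hM1] := hc (r/2) r20.
  have [M2 hM2] := archi_inv r20.
  pose m := maxn M1 M2.
  apply: (proj2 (hu (s m)) i) => y hy.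
  apply: hr; rewrite /mball /=.
  have h1' := hM1 m (leq_maxl _ _).
  have h2 := hM2 (s m) (leq_trans (leq_maxr _ _) (incr_ge hs m)).
  have := d_tri z (u (s m)) y; rewrite /mball /= in hy h1'.
move: ((s m).+1%:R^-1) h2 hy => t h2 hy.
lra.
have [n [x [Cx hx]]] : exists n (x : nat -> X), (forall j, (j < n)%N -> C (x j)) /\
    forall y, C y -> exists2 j, (j < n)%N & d (x j) y < del.
  apply: contrapT => hn.
  have h1 : forall p : nat * (nat -> X), exists y, (forall j, (j < p.1)%N -> C (p.2 j)) ->
      C y /\ forall j, (j < p.1)%N -> del <= d (p.2 j) y.
    case=> n x /=; case: (pselect (forall j, (j < n)%N -> C (x j))) => hx; last first.
      by exists c0.
    apply: contrapT => hy; apply: hn; exists n, x; split => // y Cy.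
    apply: contrapT => hj; apply: hy; exists y => _; split => // j jn.
    rewrite leNgt; apply/negP => dj; apply: hj; by exists j.
  have [g hg] := choice h1.
  pose fix F n := if n is n'.+1 then (fun j => if j == n' then g (n', F n') else F n' j)
                  else (fun _ => c0).
  have FC : forall n j, C (F n j).
    elim=> [//|n IH] j /=; case: ifP => // _.
    by apply: (proj1 (hg (n, F n) (fun j _ => IH j))).
  pose v j := g (j, F j).
  have Fv : forall n j, (j < n)%N -> F n j = v j.
    elim=> [//|n IH] j /=; rewrite ltnS leq_eqVlt; case: eqP => [->//|_ /= jn].
    exact: IH.
  have sep : forall m n, (m < n)%N -> del <= d (v m) (v n).
    move=> m n mn; rewrite -(Fv n m mn).
    exact: (proj2 (hg (n, F n) (fun j _ => FC n j)) m mn).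
  have vC : forall n, C (v n) by move=> n; exact: (proj1 (hg (n, F n) (fun j _ => FC n j))).
  have [z [s [_ [hs hc]]]] := hS v vC.
  have d20 : 0 < del / 2 by rewrite divr_gt0.
  have [M hM] := hc _ d20.
  have h1' := hM M (leqnn _).
  have h2 := hM M.+1 (leqnSn _).
  have h3 := sep _ _ (hs M M.+1 (ltnSn _)).
  have := d_tri (v (s M)) z (v (s M.+1)); rewrite d_sym in h1'; lra.
have h2 : forall j, exists i, (j < n)%N -> mball d (x j) del `<=` U i.
  move=> j; case: (ltnP j n) => jn; last by exists i0.
  by have [i hi] := hdel _ (Cx j jn); exists i.
have [ii hii] := choice h2.
exists (ii @` `I_n); first exact: finite_image.
move=> y Cy; have [j jn hj] := hx y Cy.
exists (ii j); first by exists j.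
exact: hii.
Qed.

Lemma conv_sub z u t : conv z u -> incr t -> conv z (fun m => u (t m)).
Proof.
move=> hc ht e e0; have [M hM] := hc e e0; exists M => m Mm.
apply: hM; exact: leq_trans Mm (incr_ge ht m).
Qed.

End Metric.

Section CS.
Variable k : nat.

Lemma sum_sq_ge0 (a : 'I_k -> R) : 0 <= \sum_i a i ^+ 2.
Proof. by apply: sumr_ge0 => i _; apply: sqr_ge0. Qed.

Lemma sum_sq_eq0 (a : 'I_k -> R) : Num.sqrt (\sum_i a i ^+ 2) = 0 -> forall i, a i = 0.
Proof.
move/eqP; rewrite sqrtr_eq0 => h.
have h0 : \sum_i a i ^+ 2 = 0 by apply/le_anti; rewrite h sum_sq_ge0.
move=> i; have /psumr_eq0P h1 := h0.
apply/eqP; rewrite -sqrf_eq0; apply/eqP; apply: h1 => // j _; exact: sqr_ge0.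
Qed.

Lemma cauchy_schwarz (a b : 'I_k -> R) :
  \sum_i a i * b i <= Num.sqrt (\sum_i a i ^+ 2) * Num.sqrt (\sum_i b i ^+ 2).
Proof.
set A := Num.sqrt _; set B := Num.sqrt _.
have A0 : 0 <= A by apply: sqrtr_ge0.
have B0 : 0 <= B by apply: sqrtr_ge0.
have A2 : A ^+ 2 = \sum_i a i ^+ 2 by rewrite sqr_sqrtr // sum_sq_ge0.
have B2 : B ^+ 2 = \sum_i b i ^+ 2 by rewrite sqr_sqrtr // sum_sq_ge0.
have key : (2 * A * B) * \sum_i a i * b i <= (2 * A * B) * (A * B).
  have -> : (2 * A * B) * (A * B) = B ^+ 2 * A ^+ 2 + A ^+ 2 * B ^+ 2 by ring.
  have -> : B ^+ 2 * A ^+ 2 + A ^+ 2 * B ^+ 2 =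
      \sum_i (B ^+ 2 * a i ^+ 2 + A ^+ 2 * b i ^+ 2).
    by rewrite big_split /= -!mulr_sumr -A2 -B2.
  rewrite mulr_sumr.
  apply: ler_sum => i _; rewrite -subr_ge0; have -> : B ^+ 2 * a i ^+ 2 + A ^+ 2 * b i ^+ 2 - 2 * A * B * (a i * b i) = (B * a i - A * b i) ^+ 2 by ring.
  exact: sqr_ge0.
have [AB0|] := eqVneq (A * B) 0.
  move: AB0 => /eqP; rewrite mulf_eq0 => /orP [] /eqP h.
  - have ha := sum_sq_eq0 h; rewrite (eq_bigr (fun _ => 0)); last first.
      by move=> i _; rewrite ha mul0r.
    by rewrite big1 // mulr_ge0.
  - have hb := sum_sq_eq0 h; rewrite (eq_bigr (fun _ => 0)); last first.
      by move=> i _; rewrite hb mulr0.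
    by rewrite big1 // mulr_ge0.
move=> ABn0.
have ABp : 0 < 2 * A * B by rewrite -mulrA mulr_gt0 // lt0r ABn0 mulr_ge0.
by rewrite -(ler_pM2l ABp).
Qed.

Lemma minkowski (a b : 'I_k -> R) :
  Num.sqrt (\sum_i (a i + b i) ^+ 2) <=
  Num.sqrt (\sum_i a i ^+ 2) + Num.sqrt (\sum_i b i ^+ 2).
Proof.
set A := Num.sqrt (\sum_i a i ^+ 2); set B := Num.sqrt (\sum_i b i ^+ 2).
have A0 : 0 <= A by apply: sqrtr_ge0.
have B0 : 0 <= B by apply: sqrtr_ge0.
have A2 : A ^+ 2 = \sum_i a i ^+ 2 by rewrite sqr_sqrtr // sum_sq_ge0.
have B2 : B ^+ 2 = \sum_i b i ^+ 2 by rewrite sqr_sqrtr // sum_sq_ge0.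
have cs := cauchy_schwarz a b.
have -> : A + B = Num.sqrt ((A + B) ^+ 2) by rewrite sqrtr_sqr ger0_norm // addr_ge0.
apply: ler_wsqrtr.
have -> : \sum_i (a i + b i) ^+ 2 = \sum_i a i ^+ 2 + (\sum_i a i * b i) *+ 2 + \sum_i b i ^+ 2.
  rewrite -sumrMnl -!big_split /=; apply: eq_bigr => i _; ring.
rewrite -A2 -B2.
have -> : (A + B) ^+ 2 = A ^+ 2 + (A * B) *+ 2 + B ^+ 2 by ring.
rewrite lerD2r lerD2l lerMn2r /=; exact: cs.
Qed.

End CS.

Unset Implicit Arguments.
Section Prod.
Variables (k : nat) (X : 'I_k -> Type) (d : forall i, X i -> X i -> R)
  (hd : forall i, is_metric (d i)).

Lemma prod_metric : is_metric (prod_dist d).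
Proof.
split.
- by move=> x y; apply: sqrtr_ge0.
- move=> x y; split=> [h|->].
    have hi := sum_sq_eq0 (a := fun i => d i (x i) (y i)) h.
    apply: functional_extensionality_dep => i.
    by case: (hd i) => _ H _ _; apply/H.
  rewrite /prod_dist big1 ?sqrtr0 // => i _.
  by rewrite (d_xx (hd i)) expr0n.
- move=> x y; rewrite /prod_dist; congr Num.sqrt; apply: eq_bigr => i _.
  by rewrite (d_sym (hd i)).
- move=> x y z; rewrite /prod_dist; apply: le_trans (minkowski _ _).
  apply: ler_wsqrtr; apply: ler_sum => i _.
  have h1 := d_tri (hd i) (x i) (y i) (z i).
  have h0 := d_ge0 (hd i) (x i) (z i).
  nra.
Qed.

Lemma coord_le x y i : d i (x i) (y i) <= prod_dist d x y.
Proof.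
rewrite /prod_dist -(ger0_norm (d_ge0 (hd i) (x i) (y i))) -sqrtr_sqr.
apply: ler_wsqrtr; rewrite (bigD1 i) //= lerDl.
by apply: sumr_ge0 => j _; apply: sqr_ge0.
Qed.

Lemma prod_conv z u : (forall i, conv (d i) (z i) (fun m => u m i)) ->
  conv (prod_dist d) z u.
Proof.
move=> hc e e0.
pose eta := e ^+ 2 / k.+1%:R.
have eta0 : 0 < eta by rewrite divr_gt0 // exprn_gt0.
have h1 : forall i, exists M, forall m, (M <= m)%N -> d i (z i) (u m i) < Num.sqrt eta.
  by move=> i; apply: hc; rewrite sqrtr_gt0.
have [f hf] := choice h1.
exists (\max_i f i) => m Mm.
rewrite /prod_dist -(ger0_norm (ltW e0)) -sqrtr_sqr ltr_sqrt ?exprn_gt0 //.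
apply: (@le_lt_trans _ _ (eta *+ k)).
  rewrite -[k in _ *+ k]card_ord -sumr_const; apply: ler_sum => i _.
  have := hf i m (leq_trans (leq_bigmax i) Mm).
  have := d_ge0 (hd i) (z i) (u m i).
  have := sqr_sqrtr (ltW eta0).
  move: (Num.sqrt eta) => s. nra.
rewrite -mulr_natr /eta mulrAC ltr_pdivrMr // ltr_pM2l ?exprn_gt0 // ltr_nat.
by [].
Qed.

Lemma diag (C : forall i, set (X i)) (hC : forall i, mcompact (d i) (C i))
  (w : nat -> forall i, X i) (hw : forall n i, C i (w n i)) :
  exists z s, incr s /\ conv (prod_dist d) z (fun m => w (s m)).
Proof.
have P : forall j, exists s, incr s /\ forall i : 'I_k, (i < j)%N ->
    exists zi, conv (d i) zi (fun m => w (s m) i).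
  elim=> [|j [s [hs hP]]]; first by exists id; split.
  case: (ltnP j k) => jk; last first.
    exists s; split=> // i ij; apply: hP; exact: leq_trans (ltn_ord i) jk.
  pose i0 : 'I_k := Ordinal jk.
  have [z [t [ht hz]]] := compact_seq (hd i0) (u := fun m => w (s m) i0) (hC i0)
     (fun m => hw _ _).
  exists (fun m => s (t m)); split; first exact: incr_comp.
  move=> i; rewrite ltnS leq_eqVlt; case: eqP => [ij _|_ /= ij].
    have -> : i = i0 by apply: val_inj.
    by exists z.
  have [zi hzi] := hP i ij; exists zi.
  exact: (conv_sub (u := fun m => w (s m) i)).
have [s [hs hP]] := P k.
exists (fun i => sval (cid (hP i (ltn_ord i)))), s; split => //.
apply: prod_conv => i; exact: (svalP (cid (hP i (ltn_ord i)))).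
Qed.

Lemma prod_proper : (forall i, proper_metric (d i)) -> proper_metric (prod_dist d).
Proof.
move=> hX; split; first exact: prod_metric.
move=> y r; apply: seq_compact; first exact: prod_metric.
move=> u hu.
have [z [s [hs hc]]] := diag (fun i => mclosed_ball (d i) (y i) r)
  (fun i => (hX i).2 (y i) r) u
  (fun n i => le_trans (coord_le y (u n) i) (hu n)).
exists z, s; split; last by split.
rewrite /mclosed_ball /= leNgt; apply/negP => hlt.
have [M hM] : exists M, forall m, (M <= m)%N -> prod_dist d z (u (s m)) < prod_dist d y z - r.
  by apply: hc; rewrite subr_gt0.
have h1 := hM M (leqnn _).
have h2 := d_tri prod_metric y (u (s M)) z.
have h3 := hu (s M); rewrite /mclosed_ball /= in h3.
rewrite (d_sym prod_metric) in h1; lra.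
Qed.

End Prod.
Set Implicit Arguments.

Lemma hom1 (G H : groupType) (q : G -> H) : group_hom q -> q 1%g = 1%g.
Proof.
move=> hq; apply: (@mulgI _ (q 1%g)); by rewrite -hq !mulg1.
Qed.

Lemma transfer_cond (H G : groupType) (q : G -> H) (hq : group_hom q)
  (hs : forall h, exists g, q g = h) (K : pseudoPMetricType R) (a : H -> K -> K)
  (eta : probability (borel K) R) :
  [/\ compact_metrizable K, continuous_action a, ~ has_invariant_prob a & diffuse eta] ->
  [/\ compact_metrizable K, continuous_action (fun g => a (q g)),
      ~ has_invariant_prob (fun g => a (q g)) & diffuse eta].
Proof.
case=> hK [[a1 aM] ac] hni he; split => //.
- split; last by move=> g; apply: ac.
  split; first by move=> y; rewrite hom1 // a1.
  by move=> g h y; rewrite hq aM.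
- move=> [mu hmu]; apply: hni; exists mu => h A mA.
  by have [g <-] := hs h; apply: hmu.
Qed.

Lemma transfer_weak (H G : groupType) (q : G -> H) (hq : group_hom q)
  (K : pseudoPMetricType R) (a : H -> K -> K) (eta : probability (borel K) R)
  (u : nat -> G) :
  weakstar_asymp a eta (fun n => q (u n)) ->
  weakstar_asymp (fun g => a (q g)) eta u.
Proof.
move=> hw g f cf; have := hw (q g) f cf.
move=> h; by under eq_fun => n do rewrite hq.
Qed.

Unset Implicit Arguments.
Section Main.
Variables (k : nat) (Gs : 'I_k -> groupType) (X : 'I_k -> Type)
  (d : forall i, X i -> X i -> R) (act : forall i, Gs i -> X i -> X i)
  (hX : forall i, proper_metric (d i))
  (hact : forall i, isometric_action (d i) (act i))
  (G : groupType) (p : forall i, G -> Gs i) (hp_hom : forall i, group_hom (p i)).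

Lemma prod_iso : isometric_action (prod_dist d) (prod_act p act).
Proof.
split; first split.
- move=> y; apply: functional_extensionality_dep => i.
  by rewrite /prod_act hom1 // (hact i).1.1.
- move=> g h y; apply: functional_extensionality_dep => i.
  by rewrite /prod_act hp_hom (hact i).1.2.
- move=> g x y; rewrite /prod_dist; congr Num.sqrt; apply: eq_bigr => i _.
  by rewrite /prod_act (hact i).2.
Qed.

Lemma escape_coord h : escapes (prod_dist d) (prod_act p act) h ->
  exists i s, incr s /\ escapes (d i) (act i) (fun n => p i (h (s n))).
Proof.
move=> [y hy].
pose a i n := d i (y i) (act i (p i (h n)) (y i)).
apply: contrapT => hn.
have hb : forall i, exists MN : R * nat, forall n, (MN.2 <= n)%N -> a i n <= MN.1.
  move=> i; apply: contrapT => hi; apply: hn.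
  have hP : forall m N, exists n, (N <= n)%N /\ m%:R < a i n.
    move=> m N; apply: contrapT => hmN; apply: hi; exists (m%:R, N) => n /= Nn.
    rewrite leNgt; apply/negP => lt; apply: hmN; by exists n.
  have [s [hs hs']] := extract hP.
  exists i, s; split => //; exists (y i) => C hC.
  have [B hB] := compact_bounded (hX i).1 (y i) hC.
  have hBb := @archi_boundP _ `|B| (normr_ge0 B).
  exists (Num.Def.archi_bound `|B|) => n Nn Cx.
  have h1 := hB _ Cx.
  have h2 := hs' n.
  have h3 : (Num.Def.archi_bound `|B|)%:R <= n%:R :> R by rewrite ler_nat.
  have h4 := ler_norm B.
  rewrite /a in h2; lra.
have [f hf] := choice hb.
pose r := Num.sqrt (\sum_i (f i).1 ^+ 2).
have [N0 hN0] := hy _ ((prod_proper _ _ _ (fun i => (hX i).1) hX).2 y r).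
apply: (hN0 (N0 + \max_i (f i).2)%N); first exact: leq_addr.
rewrite /mclosed_ball /prod_dist /=; apply: ler_wsqrtr; apply: ler_sum => i _.
have h1 := hf i (N0 + \max_i (f i).2)%N (leq_trans (leq_bigmax i) (leq_addl _ _)).
have h0 := d_ge0 (hX i).1 (y i) (act i (p i (h (N0 + \max_i (f i).2)%N)) (y i)).
rewrite /a in h1; rewrite /prod_act; nra.
Qed.

End Main.
Set Implicit Arguments.

Unset Implicit Arguments.
Record PPdata (H : groupType) := PPD {
  ppl : nat;
  ppK : 'I_ppl -> pseudoPMetricType R;
  ppA : forall j, H -> ppK j -> ppK j;
  ppE : forall j, probability (borel (ppK j)) R }.
Arguments ppl {H}. Arguments ppK {H}. Arguments ppA {H}. Arguments ppE {H}.
Arguments PPD {H}.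

Definition pp_ok (H : groupType) (Y : Type) (dY : Y -> Y -> R) (actY : H -> Y -> Y)
  (D : PPdata H) : Prop :=
  (forall j, [/\ compact_metrizable (ppK D j), continuous_action (ppA D j),
                 ~ has_invariant_prob (ppA D j) & diffuse (ppE D j)]) /\
  forall h : nat -> H, escapes dY actY h ->
    exists (j : 'I_(ppl D)) (sigma : nat -> nat), incr sigma /\
      weakstar_asymp (ppA D j) (ppE D j) (fun n => h (sigma n)).

Lemma pp_data (H : groupType) (Y : Type) (dY : Y -> Y -> R) (actY : H -> Y -> Y) :
  properly_proximal dY actY -> exists D : PPdata H, pp_ok H Y dY actY D.
Proof.
case=> _ [_ [l [K [A [E [h1 h2]]]]]].
by exists (PPD l K A E); split.
Qed.
Set Implicit Arguments.

Theorem lemma1p4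
  (k : nat)
  (Gs : 'I_k -> groupType)
  (X : 'I_k -> Type)
  (d : forall i, X i -> X i -> R)
  (act : forall i, Gs i -> X i -> X i)
  (hGs_countable : forall i, countable_group (Gs i))
  (hX : forall i, proper_metric (d i))
  (hact : forall i, isometric_action (d i) (act i))
  (hpp : forall i, properly_proximal (d i) (act i))
  (G : groupType)
  (p : forall i, G -> Gs i)
  (hp_hom : forall i, group_hom (p i))
  (hp_inj : forall x y : G, (forall i, p i x = p i y) -> x = y)
  (hp_surj : forall i (g : Gs i), exists x : G, p i x = g) :
  properly_proximal (prod_dist d) (prod_act p act).
Proof.
split; first exact: (prod_proper _ _ _ (fun i => (hX i).1) hX).
split; first exact: (prod_iso k Gs X d act hact G p hp_hom).
have hD : forall i, exists D : PPdata (Gs i), pp_ok _ _ (d i) (act i) D.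
  by move=> i; apply: pp_data.
pose D i := sval (cid (hD i)).
have hDi : forall i, pp_ok _ _ (d i) (act i) (D i) by move=> i; exact: (svalP (cid (hD i))).
pose T := {i : 'I_k & 'I_(ppl (D i))}.
pose KK (s : T) := ppK (D (tag s)) (tagged s).
pose AA (s : T) : G -> KK s -> KK s := fun g => ppA (D (tag s)) (tagged s) (p (tag s) g).
pose EE (s : T) : probability (borel (KK s)) R := ppE (D (tag s)) (tagged s).
exists #|{: T}|, (fun t => KK (enum_val t)), (fun t => AA (enum_val t)),
  (fun t => EE (enum_val t)).
split.
  move=> t; apply: transfer_cond; [exact: hp_hom | exact: hp_surj | exact: (hDi _).1].
move=> h hh.
have [i [s [hs hesc]]] := escape_coord k Gs X d act hX G p h hh.
have [j [s' [hs' hw]]] := (hDi i).2 _ hesc.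
exists (enum_rank (Tagged (fun i => 'I_(ppl (D i))) j : T)), (fun n => s (s' n)).
rewrite enum_rankK; split; first exact: incr_comp.
by apply: transfer_weak => //; exact: hw.
Qed.
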